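(* Let $G$ be a graph and let $P,Q$ be bicliques of $G$. If there is a biclique $R$ of $G$ that is mutually included with $P$ and mutually included with $Q$, then $P\cap Q\neq\emptyset$.
   Context: All graphs are finite and simple. A biclique of a graph $G$ is a set $P\subseteq V(G)$ such that the induced subgraph $G[P]$ is a complete bipartite graph with both parts nonempty, and $P$ is inclusion-maximal with this property. Since $G[P]$ is connected, its bipartition into two nonempty independent sets $X,Y$ (every vertex of $X$ adjacent to every vertex of $Y$) is unique; we write $P=XY$ to mean $P=X\cup Y$ with $X,Y$ these two parts, called the sides of $P$. Two bicliques $P,Q$ of $G$ are mutually included if their sides can be named $P=X_PY_P$, $Q=X_QY_Q$ so that $X_Q\subsetneq X_P$ and $Y_P\subsetneq Y_Q$. *)

(* Defs.v *)
From mathcomp Require Import all_boot.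
Set Implicit Arguments. Unset Strict Implicit. Unset Printing Implicit Defensive.

Definition simple_graph (T : finType) (e : rel T) : Prop :=
  symmetric e /\ irreflexive e.

Definition independent (T : finType) (e : rel T) (X : {set T}) : Prop :=
  forall x y, x \in X -> y \in X -> ~~ e x y.

(* X, Y are the two sides of an induced complete bipartite subgraph on
   X :|: Y : both nonempty, disjoint, independent, fully joined. *)
Definition cbip_sides (T : finType) (e : rel T) (X Y : {set T}) : Prop :=
  [/\ X != set0, Y != set0, [disjoint X & Y],
      independent e X /\ independent e Y &
      forall x y, x \in X -> y \in Y -> e x y].

Definition complete_bip (T : finType) (e : rel T) (P : {set T}) : Prop :=
  exists X Y : {set T}, P = X :|: Y /\ cbip_sides e X Y.

Definition biclique (T : finType) (e : rel T) (P : {set T}) : Prop :=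
  complete_bip e P /\
  forall P' : {set T}, P \subset P' -> complete_bip e P' -> P' = P.

Definition mutually_included (T : finType) (e : rel T) (P Q : {set T}) : Prop :=
  exists XP YP XQ YQ : {set T},
    [/\ P = XP :|: YP /\ cbip_sides e XP YP,
        Q = XQ :|: YQ /\ cbip_sides e XQ YQ,
        XQ \proper XP & YP \proper YQ].

(* Main.v *)
Require Import Defs.
From mathcomp Require Import all_boot.

Theorem lemma2 (T : finType) (e : rel T) (P Q : {set T}) :
  simple_graph e -> biclique e P -> biclique e Q ->
  (exists R : {set T}, biclique e R /\
     mutually_included e R P /\ mutually_included e R Q) ->
  P :&: Q != set0.
Proof.
move=> _ _ _ [R [_ [[XR [YR [XP [YP [[eR [XR0 YR0 _ [iXR iYR] eXY]] [eP [XP0 _ _ _ _]] sXP sYR]]]]]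
  [XR' [YR' [XQ [YQ [[eR' [_ _ _ [iXR' iYR'] _]] [eQ _] sXQ sYR']]]]]]]].
have [y yY] := set0Pn _ YR0.
apply/set0Pn.
have : y \in R by rewrite eR inE yY orbT.
rewrite eR' inE => /orP [yX'|yY'].
- have [x xP] := set0Pn _ XP0.
  have xX : x \in XR := subsetP (proper_sub sXP) _ xP.
  have : x \in R by rewrite eR inE xX.
  rewrite eR' inE => /orP [xX'|xY'].
    by have := iXR' _ _ xX' yX'; rewrite eXY.
  exists x; rewrite inE eP eQ !inE xP.
  by rewrite (subsetP (proper_sub sYR') _ xY') !orbT.
- exists y; rewrite inE eP eQ !inE.
  by rewrite (subsetP (proper_sub sYR) _ yY) (subsetP (proper_sub sYR') _ yY') !orbT.
Qed.
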